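(* Let $G,K,L,N_r\ge1$. For each $g\in\{1,\dots,G\}$ let $R_g\ge L$, let $\mathbf U_g\in\mathbb C^{N_r\times R_g}$ have orthonormal columns, let $\boldsymbol\Lambda_g\in\mathbb R^{R_g\times R_g}$ be diagonal with positive diagonal entries, and assume $\mathbf U_g^H\mathbf U_{g'}=\mathbf 0$ for all $g\neq g'$ (disjoint clusters). For $k\in\{1,\dots,K\}$ let $\mathbf W_{g,k}\in\mathbb C^{R_g\times L}$ and $\mathbf H_{g,k}=\mathbf U_g\boldsymbol\Lambda_g^{1/2}\mathbf W_{g,k}$. For $\mathbf A\in\mathbb C^{L\times N_r}$ define $$f(\mathbf A)=\mathrm{tr}(\mathbf A\mathbf A^H)\,\max_{g,k}\mathrm{tr}\big((\mathbf A\mathbf H_{g,k}\mathbf H_{g,k}^H\mathbf A^H)^{-1}\big),$$ with $f(\mathbf A)=+\infty$ if some $\mathbf A\mathbf H_{g,k}\mathbf H_{g,k}^H\mathbf A^H$ is singular. Then for every $\mathbf A\in\mathbb C^{L\times N_r}$ there exist matrices $\mathbf C_g\in\mathbb C^{R_g\times L}$, $g=1,\dots,G$, such that $\mathbf A'=\sum_{g=1}^G\mathbf C_g^H\mathbf U_g^H$ satisfies $f(\mathbf A')\le f(\mathbf A)$. In particular, if $\min_{\mathbf A}f(\mathbf A)$ is attained, then it is attained by a matrix of the form $\sum_{g=1}^G\mathbf C_g^H\mathbf U_g^H$ with $\mathbf C_g\in\mathbb C^{R_g\times L}$.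
   Context: $(\cdot)^H$ denotes conjugate transpose; $\mathrm{tr}$ is the trace. The minimization of $f$ over $\mathbf A$ is the aggregation-beamforming design problem (P2). *)

(* Defs.v *)
(* Complex scalars: an arbitrary numClosedFieldType C
   (algebraically closed field with conjugation and order, e.g. algC / the complexes). *)
From HB Require Import structures.
From mathcomp Require Import all_boot all_order all_algebra.
Set Implicit Arguments. Unset Strict Implicit. Unset Printing Implicit Defensive.
Import Order.TTheory GRing.Theory Num.Theory.
Local Open Scope ring_scope.

Definition mxH (C : numClosedFieldType) (m n : nat) (A : 'M[C]_(m, n)) : 'M[C]_(n, m) :=
  (map_mx Num.conj A)^T.

(* Extended values: None stands for +infinity. *)
Definition ext_le (C : numClosedFieldType) (x y : option C) : bool :=
  match y, x with
  | None, _ => true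
  | Some _, None => false
  | Some b, Some a => a <= b
  end.

(* channel H_{g,k} = U_g Lambda_g^{1/2} W_{g,k}, with Lambda_g = diag(lam g),
   Lambda_g^{1/2} = diag(sqrt(lam g)) (principal square root of a positive diagonal matrix) *)
Definition chan (C : numClosedFieldType) (G K L Nr : nat) (R : 'I_G -> nat)
  (U : forall g : 'I_G, 'M[C]_(Nr, R g)) (lam : forall g : 'I_G, 'rV[C]_(R g))
  (W : forall g : 'I_G, 'I_K -> 'M[C]_(R g, L)) (g : 'I_G) (k : 'I_K) : 'M[C]_(Nr, L) :=
  U g *m diag_mx (map_mx sqrtC (lam g)) *m W g k.

Definition fobj (C : numClosedFieldType) (G K L Nr : nat) (R : 'I_G -> nat)
  (U : forall g : 'I_G, 'M[C]_(Nr, R g)) (lam : forall g : 'I_G, 'rV[C]_(R g))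
  (W : forall g : 'I_G, 'I_K -> 'M[C]_(R g, L)) (A : 'M[C]_(L, Nr)) : option C :=
  let M := fun (gk : 'I_G * 'I_K) =>
    A *m chan U lam W gk.1 gk.2 *m mxH (chan U lam W gk.1 gk.2) *m mxH A in
  if [forall gk, M gk \in unitmx] then
    Some (\tr (A *m mxH A) *
          \big[Num.max/0]_(gk : 'I_G * 'I_K) \tr (invmx (M gk)))
  else None.

(* Main.v *)
Require Import Defs.
From HB Require Import structures.
From mathcomp Require Import all_boot all_order all_algebra.
Import Order.TTheory GRing.Theory Num.Theory.
Local Open Scope ring_scope.

Lemma mxHK (C : numClosedFieldType) m n (X : 'M[C]_(m, n)) : mxH (mxH X) = X.
Proof. by apply/matrixP => i j; rewrite !mxE conjCK. Qed.

Lemma mxHM (C : numClosedFieldType) m n p (X : 'M[C]_(m, n)) (Y : 'M[C]_(n, p)) :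
  mxH (X *m Y) = mxH Y *m mxH X.
Proof. by rewrite /mxH map_mxM trmx_mul. Qed.

Lemma mxHD (C : numClosedFieldType) m n (X Y : 'M[C]_(m, n)) :
  mxH (X + Y) = mxH X + mxH Y.
Proof. by apply/matrixP => i j; rewrite !mxE rmorphD. Qed.

Lemma mxHB (C : numClosedFieldType) m n (X Y : 'M[C]_(m, n)) :
  mxH (X - Y) = mxH X - mxH Y.
Proof. by apply/matrixP => i j; rewrite !mxE rmorphB. Qed.

Lemma mxH0 (C : numClosedFieldType) m n : mxH (0 : 'M[C]_(m, n)) = 0.
Proof. by apply/matrixP => i j; rewrite !mxE rmorph0. Qed.

Lemma tr_ge0 (C : numClosedFieldType) m n (X : 'M[C]_(m, n)) : 0 <= \tr (X *m mxH X).
Proof.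
rewrite /mxtrace; apply: sumr_ge0 => i _; rewrite mxE.
apply: sumr_ge0 => j _; rewrite !mxE; exact: mul_conjC_ge0.
Qed.

Lemma trinv_ge0 (C : numClosedFieldType) n (Y : 'M[C]_n) :
  Y *m mxH Y \in unitmx -> 0 <= \tr (invmx (Y *m mxH Y)).
Proof.
move=> hM; have := hM; rewrite unitmx_mul => /andP [hY hYh].
set Z := invmx Y.
have E : invmx (Y *m mxH Y) = mxH Z *m Z.
  have hZh : mxH Z = invmx (mxH Y) by rewrite /mxH /Z map_invmx trmx_inv.
  have h1 : (Y *m mxH Y) *m (mxH Z *m Z) = 1%:M.
    by rewrite hZh mulmxA -(mulmxA Y) (mulmxV hYh) mulmx1 /Z (mulmxV hY).
  by rewrite -[LHS]mulmx1 -h1 (mulmxA (invmx (Y *m mxH Y))) (mulVmx hM) mul1mx.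
by rewrite E mxtrace_mulC tr_ge0.
Qed.

Lemma ext_le_trans (C : numClosedFieldType) (x y z : option C) :
  ext_le x y -> ext_le y z -> ext_le x z.
Proof.
by case: z => [c|] //; case: y => [b|] //; case: x => [a|] //= ? ?; apply: le_trans; eassumption.
Qed.

Lemma maxbig_ge0 (C : numClosedFieldType) (I : finType) (F : I -> C) :
  (forall i, 0 <= F i) -> 0 <= \big[Num.max/0]_(i : I) F i.
Proof.
move=> hF; apply: (big_ind (fun x => 0 <= x)) => // x y hx hy.
rewrite /Num.max; by case: ifP.
Qed.

Lemma trinv_ge0' (C : numClosedFieldType) n p (X : 'M[C]_(n, p)) (H : 'M[C]_(p, n)) :
  X *m H *m mxH H *m mxH X \in unitmx ->
  0 <= \tr (invmx (X *m H *m mxH H *m mxH X)).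
Proof. rewrite -mulmxA -mxHM; exact: trinv_ge0. Qed.

Lemma part1 (C : numClosedFieldType) (G K L Nr : nat)
  (R : 'I_G -> nat)
  (U : forall g : 'I_G, 'M[C]_(Nr, R g))
  (hU : forall g, mxH (U g) *m U g = 1%:M)
  (lam : forall g : 'I_G, 'rV[C]_(R g))
  (hdisj : forall g g' : 'I_G, g != g' -> mxH (U g) *m U g' = 0)
  (W : forall g : 'I_G, 'I_K -> 'M[C]_(R g, L)) (A : 'M[C]_(L, Nr)) :
  ext_le (fobj U lam W (\sum_(g < G) mxH (mxH (A *m U g)) *m mxH (U g))) (fobj U lam W A).
Proof.
set P := \sum_(g < G) U g *m mxH (U g).
have EA : \sum_(g < G) mxH (mxH (A *m U g)) *m mxH (U g) = A *m P.
  by rewrite mulmx_sumr; apply: eq_bigr => g _; rewrite mxHK mulmxA.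
have PU : forall g, P *m U g = U g.
  move=> g; rewrite /P mulmx_suml (bigD1 g) //= big1 ?addr0 => [|g' hg'].
    by rewrite -mulmxA hU mulmx1.
  by rewrite -mulmxA hdisj ?mulmx0.
have PH : mxH P = P.
  rewrite /P; apply: (big_rec2 (fun a b => mxH a = b)) => [|g a b _ <-].
    exact: mxH0.
  by rewrite mxHD mxHM mxHK.
have PP : P *m P = P.
  by rewrite {2}/P mulmx_sumr; apply: eq_bigr => g _; rewrite mulmxA PU.
have HC : forall g k, A *m P *m chan U lam W g k = A *m chan U lam W g k.
  by move=> g k; rewrite /chan !mulmxA -(mulmxA A P) PU.
set B := A - A *m P.
have ET : \tr (A *m mxH A) = \tr (A *m P *m mxH (A *m P)) + \tr (B *m mxH B).
  rewrite -mxtraceD; congr (\tr _).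
  rewrite /B mxHM PH mxHB mxHM PH mulmxBl !mulmxBr !mulmxA -(mulmxA A P P) PP.
  by rewrite subrr subr0 addrC subrK.
have EM : forall gk : 'I_G * 'I_K,
    A *m P *m chan U lam W gk.1 gk.2 *m mxH (chan U lam W gk.1 gk.2) *m mxH (A *m P)
    = A *m chan U lam W gk.1 gk.2 *m mxH (chan U lam W gk.1 gk.2) *m mxH A.
  move=> [g k] /=; by rewrite -!mulmxA -!mxHM !mulmxA -(mulmxA A P) PU.
rewrite EA /fobj /=.
under eq_forallb => gk do rewrite EM.
under eq_bigr => gk _ do rewrite EM.
case: ifP => //= h.
apply: ler_wpM2r.
  apply: maxbig_ge0 => gk; apply: trinv_ge0'; exact: (forallP h gk).
by rewrite ET lerDl tr_ge0.
Qed.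

Theorem proposition1 (C : numClosedFieldType) (G K L Nr : nat)
  (hG : (0 < G)%N) (hK : (0 < K)%N) (hL : (0 < L)%N) (hN : (0 < Nr)%N)
  (R : 'I_G -> nat) (hR : forall g, (L <= R g)%N)
  (U : forall g : 'I_G, 'M[C]_(Nr, R g))
  (hU : forall g, mxH (U g) *m U g = 1%:M)
  (lam : forall g : 'I_G, 'rV[C]_(R g))
  (hlam : forall g i, 0 < lam g 0 i)
  (hdisj : forall g g' : 'I_G, g != g' -> mxH (U g) *m U g' = 0)
  (W : forall g : 'I_G, 'I_K -> 'M[C]_(R g, L)) :
  (forall A : 'M[C]_(L, Nr),
     exists Cm : forall g : 'I_G, 'M[C]_(R g, L),
       ext_le (fobj U lam W (\sum_(g < G) mxH (Cm g) *m mxH (U g))) (fobj U lam W A))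
  /\
  ((exists A0 : 'M[C]_(L, Nr), forall A, ext_le (fobj U lam W A0) (fobj U lam W A)) ->
     exists Cm : forall g : 'I_G, 'M[C]_(R g, L),
       forall A, ext_le (fobj U lam W (\sum_(g < G) mxH (Cm g) *m mxH (U g))) (fobj U lam W A)).
Proof.
split.
  move=> A; exists (fun g => mxH (A *m U g)); exact: part1.
case=> A0 HA0; exists (fun g => mxH (A0 *m U g)) => A.
apply: (@ext_le_trans _ _ (fobj U lam W A0)); [exact: part1 | exact: HA0].
Qed.
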